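(* Define: (a) $a_n$ ($n\ge0$) as the number of letters of $P_1^n(\mathtt L)$, where $P_1$ is the letterwise substitution $\mathtt R\mapsto\mathtt{Rr}$, $\mathtt r\mapsto\mathtt S$, $\mathtt L\mapsto\mathtt S$, $\mathtt l\mapsto\mathtt{Ll}$, $\mathtt S\mapsto\mathtt{Rl}$, $\mathtt s\mapsto\mathtt{Lr}$; (b) $b_n$ ($n\ge1$) by $\frac{x(1+x^2)}{1-x-2x^3}=\sum_{n\ge1}b_nx^n$; (c) $c_n=|S_n|$ for $n\ge1$, where $S_n$ is the set of binary sequences of length $n$ with no maximal run of zeros of length $\equiv1\pmod 3$, and $c_0:=1$; (d) $d_n=|A_n|$ for $n\ge1$, where $A_n$ is the set of $n\times2$ arrays over $\{0,1,2\}$ in which every $1$ has a $0$ immediately to its left or above it, no $0$ has a $0$ immediately to its left or above it, and every $2$ has in its column a $1$ immediately above it and a $0$ immediately above that. Then for all $n\ge0$, $$a_n=b_{n+1}=c_n=d_{n+1}.$$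
   Context: $a_n$ is the length of the right side boundary of the polyomino $\mathcal S_n$ containing the $n$-th Harter–Heighway dragon curve. The sequences begin $1,1,2,4,6,10,\dots$ (for $a_0,a_1,\ldots$). *)

(* Defs.v *)
From HB Require Import structures.
From mathcomp Require Import all_boot all_order all_algebra.
Set Implicit Arguments. Unset Strict Implicit. Unset Printing Implicit Defensive.
Import GRing.Theory.

Inductive letter := xR | xr | xL | xl | xS | xs.

Definition P1 (c : letter) : seq letter :=
  match c with
  | xR => [:: xR; xr]
  | xr => [:: xS]
  | xL => [:: xS]
  | xl => [:: xL; xl]
  | xS => [:: xR; xl]
  | xs => [:: xL; xr]
  end.

Definition P1w (w : seq letter) : seq letter := flatten (map P1 w).

Definition a (n : nat) : nat := size (iter n P1w [:: xL]).

(* (b) b is the coefficient sequence of the formal power series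
   x(1+x^2)/(1-x-2x^3), i.e. (1 - x - 2x^3) * (sum_n b_n x^n) = x + x^3
   as formal power series (coefficientwise Cauchy product). *)
Definition gf_den : {poly int} := (1 - 'X - 2%:P * 'X^3)%R.
Definition gf_num : {poly int} := ('X + 'X^3)%R.

Definition is_gf_coeffs (b : nat -> int) : Prop :=
  forall n : nat, (\sum_(i < n.+1) gf_den`_i * b (n - i)%N = gf_num`_n)%R.

(* (c) binary sequences: true = 1, false = 0.
   [i, j) is a maximal run of zeros of s. *)
Definition is_max_zero_run (s : seq bool) (i j : nat) : bool :=
  [&& i < j, j <= size s,
      all (fun k => ~~ nth true s k) (iota i (j - i)),
      (i == 0) || nth false s i.-1
    & (j == size s) || nth false s j].

Definition no_bad_zero_run (s : seq bool) : bool :=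
  all (fun i => all (fun j => ~~ (is_max_zero_run s i j && ((j - i) %% 3 == 1)))
                    (iota 0 (size s).+1))
      (iota 0 (size s).+1).

Definition c (n : nat) : nat :=
  if n is 0 then 1 else #|[set t : n.-tuple bool | no_bad_zero_run t]|.

(* (d) n x 2 arrays over {0,1,2}; row index i (top to bottom), column j.
   "left of (i,j)" = (i, j-1), "above (i,j)" = (i-1, j). *)
Definition mget (n : nat) (A : 'M['I_3]_(n, 2)) (i j : nat) : option nat :=
  match (insub i : option 'I_n), (insub j : option 'I_2) with
  | Some i', Some j' => Some (nat_of_ord (A i' j'))
  | _, _ => None
  end.

Definition left_is (n : nat) (A : 'M['I_3]_(n, 2)) (i j v : nat) : bool :=
  (0 < j) && (mget A i j.-1 == Some v).
Definition above_is (n : nat) (A : 'M['I_3]_(n, 2)) (i j v : nat) : bool :=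
  (0 < i) && (mget A i.-1 j == Some v).

Definition ok_array (n : nat) (A : 'M['I_3]_(n, 2)) : bool :=
  [forall i : 'I_n, forall j : 'I_2,
    [&& ((A i j : nat) == 1) ==> (left_is A i j 0 || above_is A i j 0),
        ((A i j : nat) == 0) ==> ~~ (left_is A i j 0 || above_is A i j 0)
      & ((A i j : nat) == 2) ==>
          (above_is A i j 1 && (1 < i) && (mget A i.-2 j == Some 0))]].

Definition d (n : nat) : nat := #|[set A : 'M['I_3]_(n, 2) | ok_array A]|.

(* Main.v *)
Require Import Defs.
From mathcomp Require Import all_boot all_order all_algebra.
From mathcomp Require Import zify.
From Stdlib Require Import Lia.
Set Implicit Arguments. Unset Strict Implicit. Unset Printing Implicit Defensive.
Import GRing.Theory.

Definition F n c := size (iter n P1w [:: c]).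

Lemma P1w_cat w1 w2 : P1w (w1 ++ w2) = P1w w1 ++ P1w w2.
Proof. by rewrite /P1w map_cat flatten_cat. Qed.

Lemma iter_cat n w1 w2 : iter n P1w (w1 ++ w2) = iter n P1w w1 ++ iter n P1w w2.
Proof. by elim: n => //= n IH; rewrite IH P1w_cat. Qed.

Lemma size_iter n w : size (iter n P1w w) = sumn (map (F n) w).
Proof.
elim: w => [|x w IH]; first by have -> : iter n P1w [::] = [::] by elim: n => //= n ->.
by rewrite -cat1s iter_cat size_cat IH.
Qed.

Lemma F_S n c : F n.+1 c = sumn (map (F n) (P1 c)).
Proof. by rewrite /F iterSr size_iter /P1w /= cats0. Qed.

Lemma F_rL n : F n xr = F n xL.
Proof. by case: n => // n; rewrite !F_S. Qed.

Lemma a_rec n : a n.+3 = a n.+2 + 2 * a n.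
Proof.
rewrite /a -!/(F _ _) !F_S /= !F_S /= !F_S /= F_rL. lia.
Qed.

Lemma a0 : a 0 = 1. Proof. by []. Qed.
Lemma a1 : a 1 = 1. Proof. by []. Qed.
Lemma a2 : a 2 = 2. Proof. by []. Qed.

Lemma den_coef i : (gf_den`_i = if (i == 0)%N then 1 else if (i == 1)%N then -1 else if (i == 3)%N then -2 else 0)%R.
Proof.
rewrite /gf_den !coefE.
case: i => [|[|[|[|i]]]] //=.
Qed.

Lemma num_coef i : (gf_num`_i = if (i == 1)%N then 1 else if (i == 3)%N then 1 else 0)%R.
Proof.
rewrite /gf_num !coefE.
case: i => [|[|[|[|i]]]] //=.
Qed.

Section B.
Variable b : nat -> int.
Hypothesis hb : is_gf_coeffs b.

Lemma b_small : [/\ b 0 = 0, b 1 = 1, b 2 = 1 & b 3 = 2]%R.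
Proof.
have h0 := hb 0. have h1 := hb 1. have h2 := hb 2. have h3 := hb 3.

rewrite !big_ord_recl big_ord0 /= in h0 h1 h2 h3.
rewrite !big_ord0 /bump /= !den_coef !num_coef /= in h0 h1 h2 h3.
rewrite !subn0 !addn0 !add1n !subSS !subn0 in h0 h1 h2 h3.
rewrite ?mul1r ?mulN1r ?mul0r ?add0r ?addr0 in h0 h1 h2 h3.
split; lia.
Qed.

Lemma b_rec n : b n.+4 = (b n.+3 + 2 * b n.+1)%R.
Proof.
have h := hb n.+4.
rewrite !big_ord_recl /bump /= !den_coef !num_coef /= in h.
rewrite big1 in h; last first.
  move=> i _; rewrite /bump /= den_coef /=. by rewrite mul0r.
rewrite ?subn0 ?addn0 ?add1n ?subSS ?subn0 ?mul1r ?mulN1r ?mul0r ?add0r ?addr0 in h.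
lia.
Qed.

Lemma b_a n : b n.+1 = Posz (a n).
Proof.
suff: [/\ b n.+1 = Posz (a n), b n.+2 = Posz (a n.+1) & b n.+3 = Posz (a n.+2)] by case.
elim: n => [|n [h1 h2 h3]].
  by case: b_small => _ -> -> ->.
split => //; rewrite b_rec a_rec h3 h1; lia.
Qed.
End B.

Section Cnt.
Variable T : finType.
Definition cntT n (P : pred (seq T)) : nat := \sum_(t : n.-tuple T) P t.

Lemma card_cnt n (P : pred (seq T)) : #|[set t : n.-tuple T | P t]| = cntT n P.
Proof.
rewrite /cntT -sum1_card big_mkcond /=; apply: eq_bigr => t _.
by rewrite inE; case: (P t).
Qed.

Lemma cntT0 P : cntT 0 P = P [::].
Proof.
rewrite /cntT (eq_bigr (fun _ => nat_of_bool (P [::]))); last by move=> t _; rewrite tuple0.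
by rewrite sum_nat_const card_tuple expn0 mul1n.
Qed.

Lemma cntTS n P : cntT n.+1 P = \sum_(x : T) cntT n (fun s => P (x :: s)).
Proof.
rewrite /cntT (reindex (fun p : T * n.-tuple T => cons_tuple p.1 p.2)) /=.
  by rewrite -(pair_big xpredT xpredT (fun x (t : n.-tuple T) => nat_of_bool (P (x :: t)))).
exists (fun t : n.+1.-tuple T => (thead t, [tuple of behead t])).
  by move=> [x t] _ /=; congr pair; apply: val_inj.
move=> t _; apply: val_inj => /=.
by case: t => [[|x s] //= _].
Qed.

Lemma cntT_ext n P Q : P =1 Q -> cntT n P = cntT n Q.
Proof. by move=> h; apply: eq_bigr => t _; rewrite h. Qed.

Lemma cntT_andb n (b : bool) P : cntT n (fun s => b && P s) = b * cntT n P.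
Proof.
case: b; first by rewrite mul1n.
by rewrite mul0n /cntT big1.
Qed.
End Cnt.

Definition U k t := rcons (nseq k false) true ++ t.

Lemma nthU x0 k t m : nth x0 (U k t) m =
  if m < k then false else if m == k then true else nth x0 t (m - k.+1).
Proof.
rewrite /U nth_cat size_rcons size_nseq nth_rcons size_nseq nth_nseq.
case: (ltngtP m k) => h.
- by rewrite ltnS ltnW.
- have -> : (m < k.+1) = false by lia. by [].
- by subst m; rewrite ltnSn.
Qed.

Lemma sizeU k t : size (U k t) = k.+1 + size t.
Proof. by rewrite /U size_cat size_rcons size_nseq. Qed.

Lemma run_shift k s i j :
  is_max_zero_run (U k s) (k.+1 + i) (k.+1 + j) = is_max_zero_run s i j.
Proof.
have hn : forall x0 m, nth x0 (U k s) (k.+1 + m) = nth x0 s m.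
  move=> x0 m; rewrite nthU. have -> : (k.+1 + m < k) = false by lia.
  have -> : (k.+1 + m == k) = false by lia. by rewrite addKn.
rewrite /is_max_zero_run ltn_add2l sizeU leq_add2l subnDl eqn_add2l hn.
congr [&& _, _, _, _ & _].
- by rewrite iotaDl all_map; apply: eq_all => m /=; rewrite hn.
- case: i => [|i].
    rewrite addn0 /= nthU ltnn eqxx. by [].
  by rewrite addnS /= hn.
Qed.

Definition NB s := forall i j, is_max_zero_run s i j -> (j - i) %% 3 != 1.

Lemma nbP s : reflect (NB s) (no_bad_zero_run s).
Proof.
apply: (iffP idP).
- move=> H i j hr.
  have := hr; rewrite /is_max_zero_run => /and5P [hij hjs _ _ _].
  have hi : i \in iota 0 (size s).+1 by rewrite mem_iota; lia.
  have hj : j \in iota 0 (size s).+1 by rewrite mem_iota; lia.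
  have := allP (allP H i hi) j hj. by rewrite hr.
- move=> H; apply/allP => i _; apply/allP => j _; apply/negP => /andP [hr hm].
  by have := H i j hr; rewrite hm.
Qed.

Lemma NB_nseq k : NB (nseq k false) <-> k %% 3 != 1.
Proof.
split.
- case: k => [//|k] H. have := H 0 k.+1; rewrite subn0; apply.
  rewrite /is_max_zero_run size_nseq leqnn !eqxx ltn0Sn subn0 andbT.
  apply/allP => m; rewrite mem_iota nth_nseq add0n => /andP [_ ->]. by [].
- move=> hk i j. rewrite /is_max_zero_run size_nseq => /and5P [hij hjs _ hi hj].
  have ej : j = k.
    move: hj; case: eqP => // _ /=; rewrite nth_nseq; case: ifP => //; lia.
  have ei : i = 0.
    move: hi; case: eqP => // _ /=; rewrite nth_nseq; case: ifP => //; lia.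
  by rewrite ej ei subn0.
Qed.

Lemma NB_U k t : NB (U k t) <-> k %% 3 != 1 /\ NB t.
Proof.
split.
- move=> H; split.
    case: k H => [//|k] H. have := H 0 k.+1; rewrite subn0; apply.
    rewrite /is_max_zero_run sizeU /=.
    have -> : k.+1 <= (k.+2 + size t) by lia.
    rewrite nthU ltnn eqxx orbT andbT /=.
    apply/allP => m; rewrite mem_iota nthU => /andP [_ ->]. by [].
  move=> i j hr. have := H (k.+1 + i) (k.+1 + j). rewrite run_shift subnDl. by apply.
- move=> [hk H] i j hr.
  have := hr; rewrite /is_max_zero_run sizeU => /and5P [hij hjs hall hi hj].
  case: (leqP i k) => hik.
  + case: (leqP j k) => hjk.
    * have ej : j = k.
        move: hj; have -> : (j == k.+1 + size t) = false by lia.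
        rewrite /= nthU. case: ifP => //. case: eqP => //. lia.
      have ei : i = 0.
        move: hi; case: eqP => // _ /=. rewrite nthU. case: ifP => //. lia.
      by rewrite ej ei subn0.
    * exfalso. have hm : k \in iota i (j - i) by rewrite mem_iota; lia.
      by have := allP hall k hm; rewrite nthU ltnn eqxx.
  + have -> : i = k.+1 + (i - k.+1) by lia.
    have -> : j = k.+1 + (j - k.+1) by lia.
    move: hr. rewrite {1}(_ : i = k.+1 + (i - k.+1)); last by lia.
    rewrite {1}(_ : j = k.+1 + (j - k.+1)); last by lia.
    rewrite run_shift subnDl. by apply: H.
Qed.

Fixpoint okf (k : nat) (s : seq bool) : bool :=
  match s with
  | [::] => k %% 3 != 1
  | false :: t => okf k.+1 t
  | true :: t => (k %% 3 != 1) && okf 0 t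
  end.

Lemma NB_okf s k : NB (nseq k false ++ s) <-> okf k s.
Proof.
elim: s k => [|[|] t IH] k /=.
- by rewrite cats0; apply: NB_nseq.
- rewrite -cat_rcons -/(U k t) NB_U.
  have := IH 0; rewrite /= => h.
  split; [by case=> -> /h | by case/andP => -> /h].
- have -> : nseq k false ++ false :: t = nseq k.+1 false ++ t.
    by rewrite -cat1s catA -(nseqD k 1) addn1.
  by apply: IH.
Qed.

Lemma nb_okf s : no_bad_zero_run s = okf 0 s.
Proof.
apply/idP/idP.
- by move/nbP => h; apply/(NB_okf s 0).
- by move=> h; apply/nbP; apply/(NB_okf s 0).
Qed.

Lemma okf_mod k s : okf k s = okf (k %% 3) s.
Proof.
elim: s k => [|[|] t IH] k /=; first by rewrite modn_mod.
- by rewrite modn_mod.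
- rewrite IH (IH (k %% 3).+1). congr okf.
  rewrite -addn1 -(addn1 (k %% 3)). by rewrite modnDml.
Qed.

Definition Wc k n := cntT n (okf k).

Lemma WcS k n : Wc k n.+1 = (k %% 3 != 1) * Wc 0 n + Wc k.+1 n.
Proof.
rewrite /Wc cntTS big_bool /=. by rewrite cntT_andb.
Qed.

Lemma Wc3 n : Wc 3 n = Wc 0 n.
Proof. by apply: cntT_ext => s; rewrite okf_mod. Qed.

Lemma Wc0_rec n : Wc 0 n.+3 = Wc 0 n.+2 + 2 * Wc 0 n.
Proof.
rewrite (WcS 0 n.+2) (WcS 1 n.+1) (WcS 2 n) Wc3 /=. lia.
Qed.

Definition rw := ('I_3 * 'I_3)%type.
Definition toN (r : rw) : nat * nat := (nat_of_ord r.1, nat_of_ord r.2).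
Definition comp (o : option (nat * nat)) (j : nat) : option nat :=
  if o is Some r then Some (if j == 0 then r.1 else r.2) else None.
Definition cellok (left above aa : option nat) (v : nat) : bool :=
  [&& (v == 1) ==> ((left == Some 0) || (above == Some 0)),
      (v == 0) ==> ~~ ((left == Some 0) || (above == Some 0))
    & (v == 2) ==> ((above == Some 1) && (aa == Some 0))].
Definition rowok (p2 p1 : option (nat * nat)) (r : nat * nat) : bool :=
  cellok None (comp p1 0) (comp p2 0) r.1 && cellok (Some r.1) (comp p1 1) (comp p2 1) r.2.
Fixpoint okfrom p2 p1 (s : seq (nat * nat)) : bool :=
  if s is r :: s' then rowok p2 p1 r && okfrom p1 (Some r) s' else true.

Definition Wd p2 p1 n := cntT n (fun s : seq rw => okfrom p2 p1 (map toN s)).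

Lemma WdS p2 p1 n : Wd p2 p1 n.+1 =
  \sum_(a < 3) \sum_(b < 3) rowok p2 p1 (nat_of_ord a, nat_of_ord b) * Wd p1 (Some (nat_of_ord a, nat_of_ord b)) n.
Proof.
rewrite /Wd cntTS [RHS]pair_bigA /=. apply: eq_bigr => [[x y]] _ /=.
by rewrite cntT_andb.
Qed.

Lemma Wd0 p2 p1 : Wd p2 p1 0 = 1.
Proof. by rewrite /Wd cntT0. Qed.

Ltac wd := rewrite WdS !big_ord_recl !big_ord0 /= /bump /= ?mul0n ?mul1n ?add0n ?addn0.

Notation r01 := (Some (0,1)). Notation r10 := (Some (1,0)). Notation r21 := (Some (2,1)).
Notation r02 := (Some (0,2)). Notation r12 := (Some (1,2)). Notation r20 := (Some (2,0)).

Lemma eA n : Wd None None n.+1 = Wd None r01 n. Proof. by wd. Qed.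
Lemma eB n : Wd None r01 n.+1 = Wd r01 r10 n. Proof. by wd. Qed.
Lemma eC n : Wd r01 r10 n.+1 = Wd r10 r01 n + Wd r10 r21 n. Proof. by wd. Qed.
Lemma eD n : Wd r10 r21 n.+1 = Wd r21 r01 n + Wd r21 r02 n. Proof. by wd. Qed.
Lemma eE n : Wd r21 r02 n.+1 = Wd r02 r10 n. Proof. by wd. Qed.
Lemma eF n : Wd r02 r10 n.+1 = Wd r10 r01 n + Wd r10 r21 n. Proof. by wd. Qed.
Lemma eG n : Wd r21 r01 n.+1 = Wd r01 r10 n. Proof. by wd. Qed.
Lemma eH n : Wd r10 r01 n.+1 = Wd r01 r10 n + Wd r01 r12 n. Proof. by wd. Qed.
Lemma eI n : Wd r01 r12 n.+1 = Wd r12 r01 n + Wd r12 r20 n. Proof. by wd. Qed.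
Lemma eJ n : Wd r12 r20 n.+1 = Wd r20 r01 n. Proof. by wd. Qed.
Lemma eK n : Wd r20 r01 n.+1 = Wd r01 r10 n + Wd r01 r12 n. Proof. by wd. Qed.
Lemma eL n : Wd r12 r01 n.+1 = Wd r01 r10 n. Proof. by wd. Qed.

Lemma inv n :
  [/\ Wd r02 r10 n = Wd r01 r10 n, Wd r20 r01 n = Wd r10 r01 n,
      Wd r21 r01 n = Wd r21 r02 n, Wd r12 r01 n = Wd r21 r02 n &
      [/\ Wd r10 r01 n = Wd r01 r10 n, Wd r01 r12 n = Wd r10 r21 n &
          Wd r12 r20 n = Wd r21 r02 n]].
Proof.
elim: n => [|n [h1 h2 h3 h4 [h5 h6 h7]]]; first by rewrite !Wd0.
rewrite eF eC eK eH eG eE eL eI eD eJ.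
split; try split; lia.
Qed.

Lemma WC_rec n : Wd r01 r10 n.+3 = Wd r01 r10 n.+2 + 2 * Wd r01 r10 n.
Proof.
have [h1 h2 h3 h4 [h5 h6 h7]] := inv n.+2.
rewrite (eC n.+2) h5 eD eG eE.
have [g1 g2 g3 g4 [g5 g6 g7]] := inv n. lia.
Qed.

Lemma WC_small : [/\ Wd r01 r10 0 = 1, Wd r01 r10 1 = 2 & Wd r01 r10 2 = 4].
Proof.
split; [by rewrite Wd0 | by rewrite eC !Wd0 | by rewrite eC eH eD !Wd0].
Qed.

Lemma okfrom_all p2 p1 s : okfrom p2 p1 s =
  all (fun i => rowok (nth None (p2 :: p1 :: map Some s) i)
                      (nth None (p2 :: p1 :: map Some s) i.+1) (nth (0,0) s i))
      (iota 0 (size s)).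
Proof.
elim: s p2 p1 => [//|r s IH] p2 p1 /=.
rewrite IH; congr andb.
rewrite (iotaDl 1 0) all_map. by apply: eq_all.
Qed.

Lemma forall_I2 (P : pred 'I_2) : [forall j, P j] = P ord0 && P ord_max.
Proof.
apply/forallP/andP => [H|[H0 H1] [[|[|m]] hm]]; first by split; apply: H.
- by rewrite (_ : Ordinal hm = ord0) //; apply: val_inj.
- by rewrite (_ : Ordinal hm = ord_max) //; apply: val_inj.
- by [].
Qed.

Section Mat.
Variable n : nat.
Variable A : 'M['I_3]_(n, 2).

Definition rowsT : n.-tuple rw := [tuple (A i ord0, A i ord_max) | i < n].
Definition gA k j := odflt 0 (mget A k j).

Lemma mget_ord (i : 'I_n) (j : 'I_2) : mget A i j = Some (nat_of_ord (A i j)).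
Proof. by rewrite /mget !valK. Qed.

Lemma Aval (i : 'I_n) (j : 'I_2) : nat_of_ord (A i j) = gA i j.
Proof. by rewrite /gA mget_ord. Qed.

Lemma mget_lt k j : k < n -> j < 2 -> mget A k j = Some (gA k j).
Proof.
move=> hk hj. have := mget_ord (Ordinal hk) (Ordinal hj). rewrite /= => e.
by rewrite /gA e.
Qed.

Lemma nth_rows k : k < n -> nth (0,0) (map toN rowsT) k = (gA k 0, gA k 1).
Proof.
move=> hk.
rewrite (nth_map (ord0, ord0)); last by rewrite size_tuple.
rewrite -(tnth_nth (ord0, ord0) rowsT (Ordinal hk)) tnth_mktuple /toN /=.
by rewrite !Aval.
Qed.

Lemma nth_z k : k < n ->
  nth None (None :: None :: map Some (map toN rowsT)) k.+2 = Some (gA k 0, gA k 1).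
Proof.
move=> hk. change (nth None (map Some (map toN rowsT)) k = Some (gA k 0, gA k 1)).
rewrite (nth_map (0,0)); last by rewrite size_map size_tuple.
by rewrite nth_rows.
Qed.

Lemma eqSome (x y : nat) : (Some x == Some y) = (x == y).
Proof. by []. Qed.

Lemma eqNone (y : nat) : (None == Some y) = false.
Proof. by []. Qed.

Lemma rowE (i : 'I_n) :
 [forall j : 'I_2,
    [&& ((A i j : nat) == 1) ==> (left_is A i j 0 || above_is A i j 0),
        ((A i j : nat) == 0) ==> ~~ (left_is A i j 0 || above_is A i j 0)
      & ((A i j : nat) == 2) ==>
          (above_is A i j 1 && (1 < i) && (mget A i.-2 j == Some 0))]]
 = rowok (nth None (None :: None :: map Some (map toN rowsT)) i)
         (nth None (None :: None :: map Some (map toN rowsT)) i.+1)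
         (nth (0,0) (map toN rowsT) i).
Proof.
rewrite forall_I2 !Aval /left_is /above_is.
case: i => [[|[|m]] hm].
- by rewrite nth_rows //= !mget_lt //.
- have h0 : 0 < n by lia.
  by rewrite nth_z // nth_rows //= !mget_lt // /rowok /cellok /= !eqSome ?eqNone ?ltnn ?andbF ?andFb.
- have h0 : m < n by lia. have h1 : m.+1 < n by lia.
  rewrite nth_z // nth_z // nth_rows //= !mget_lt // /rowok /cellok /= !eqSome.
  by rewrite (_ : 1 < m.+2 = true) // !andbT.
Qed.
Lemma okA : ok_array A = okfrom None None (map toN rowsT).
Proof.
rewrite okfrom_all size_map size_tuple /ok_array.
apply/forallP/allP.
- move=> H k; rewrite mem_iota add0n => /andP [_ hk].
  by rewrite -(rowE (Ordinal hk)); apply: H.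
- by move=> H i; rewrite rowE; apply: H; rewrite mem_iota add0n ltn_ord.
Qed.
End Mat.

Definition matT n (t : n.-tuple rw) : 'M['I_3]_(n, 2) :=
  \matrix_(i, j) (if j == ord0 then (tnth t i).1 else (tnth t i).2).

Lemma d_Wd n : d n = Wd None None n.
Proof.
rewrite /d /Wd /cntT -sum1_card big_mkcond /=.
rewrite (reindex (@rowsT n)) /=.
  apply: eq_bigr => A _; rewrite inE okA. by case: (okfrom _ _ _).
exists (@matT n).
  move=> A _; apply/matrixP => i j; rewrite mxE tnth_mktuple /=.
  case: eqP => [-> //|hj]. congr (A i _); apply: val_inj.
  case: j hj => [[|[|m]] hm] //= hj. by case: hj; apply: val_inj.
move=> t _; apply: eq_from_tnth => i; rewrite tnth_mktuple !mxE /=.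
by case: (tnth t i).
Qed.

Lemma Wc_a m : Wc 0 m = a m.
Proof.
suff: [/\ Wc 0 m = a m, Wc 0 m.+1 = a m.+1 & Wc 0 m.+2 = a m.+2] by case.
elim: m => [|m [h1 h2 h3]].
  by rewrite !WcS /Wc !cntT0.
by split => //; rewrite Wc0_rec a_rec h3 h1.
Qed.

Lemma WC_a m : Wd r01 r10 m = a m.+1.
Proof.
suff: [/\ Wd r01 r10 m = a m.+1, Wd r01 r10 m.+1 = a m.+2 & Wd r01 r10 m.+2 = a m.+3] by case.
elim: m => [|m [h1 h2 h3]].
  by case: WC_small => -> -> ->.
by split => //; rewrite WC_rec a_rec h3 h1.
Qed.

Theorem corollary1 (b : nat -> int) (hb : is_gf_coeffs b) :
  forall n : nat, [/\ Posz (a n) = b n.+1, c n = a n & d n.+1 = a n].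
Proof.
move=> n; split.
- by rewrite (b_a hb).
- case: n => [//|n].
  rewrite /c card_cnt (cntT_ext _ nb_okf). exact: Wc_a.
- rewrite d_Wd eA. case: n => [|n]; first by rewrite Wd0.
  by rewrite eB WC_a.
Qed.
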